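(* Let $\boldsymbol{H}\in\mathbb{R}^{n\times m}$ with $\boldsymbol{H}\neq 0$, $\boldsymbol{x}\in\mathbb{R}^n$, and $\mathcal{E}(\boldsymbol{y})=\|\boldsymbol{x}-\boldsymbol{H}\boldsymbol{y}\|_2^2$ for $\boldsymbol{y}\in\mathbb{R}^m$. Let $\boldsymbol{y}^{t-1}\in\mathbb{R}^m$ be a nonzero vector with nonnegative entries, and set $\kappa=\|\boldsymbol{y}^{t-1}\|_\infty$. Suppose $\alpha$ satisfies $$0\le\alpha\le \frac{2}{\kappa\|\boldsymbol{H}\|_2^2}-1,$$ where $\|\boldsymbol{H}\|_2$ is the spectral norm. Define $$\boldsymbol{y}^t=\boldsymbol{y}^{t-1}\odot SSO_\alpha\big(\nabla\mathcal{E}(\boldsymbol{y}^{t-1})\big).$$ Then $\mathcal{E}(\boldsymbol{y}^t)\le\mathcal{E}(\boldsymbol{y}^{t-1})$.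
   Context: $\sigma(c)=\frac{1}{1+e^{-c}}$ denotes the logistic sigmoid. The Sliding Sigmoid Operator with sliding parameter $\alpha\in\mathbb{R}$ is the function $SSO_\alpha:\mathbb{R}\to\mathbb{R}$, $SSO_\alpha(z)=2\sigma(-z-\alpha)+2\sigma(\alpha)-1$; applied to a vector it acts entrywise. $\odot$ denotes the entrywise (Hadamard) product. Here $\nabla\mathcal{E}(\boldsymbol{y})=2\boldsymbol{H}^\top(\boldsymbol{H}\boldsymbol{y}-\boldsymbol{x})$. *)

(* Defs.v *)
From HB Require Import structures.
From mathcomp Require Import all_boot all_order all_algebra.
From mathcomp Require Import all_classical all_reals all_analysis.
Set Implicit Arguments. Unset Strict Implicit. Unset Printing Implicit Defensive.
Import Order.TTheory GRing.Theory Num.Theory.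
Local Open Scope ring_scope.
Local Open Scope classical_set_scope.

Section Defs.
Variable R : realType.

Definition sigmoid (c : R) : R := 1 / (1 + expR (- c)).

Definition SSO (a z : R) : R := 2 * sigmoid (- z - a) + 2 * sigmoid a - 1.

Definition SSOv (n : nat) (a : R) (v : 'cV[R]_n) : 'cV[R]_n :=
  \col_i SSO a (v i 0).

Definition norm2 (n : nat) (v : 'cV[R]_n) : R :=
  Num.sqrt (\sum_(i < n) v i 0 ^+ 2).

Definition norminf (n : nat) (v : 'cV[R]_n) : R :=
  \big[Num.max/0]_(i < n) `|v i 0|.

Definition spec_norm (n m : nat) (H : 'M[R]_(n, m)) : R :=
  sup [set norm2 (H *m y) | y in [set y : 'cV[R]_m | norm2 y <= 1]].

Definition energy (n m : nat) (H : 'M[R]_(n, m)) (x : 'cV[R]_n)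
  (y : 'cV[R]_m) : R := norm2 (x - H *m y) ^+ 2.

Definition gradE (n m : nat) (H : 'M[R]_(n, m)) (x : 'cV[R]_n)
  (y : 'cV[R]_m) : 'cV[R]_m := 2 *: (H^T *m (H *m y - x)).

Definition hadamard (m : nat) (u v : 'cV[R]_m) : 'cV[R]_m :=
  \col_i (u i 0 * v i 0).

End Defs.

(* Main.v *)
Require Import Defs.
From HB Require Import structures.
From mathcomp Require Import all_boot all_order all_algebra.
From mathcomp Require Import all_classical all_reals all_analysis.
From mathcomp Require Import ring lra.
Import Order.TTheory GRing.Theory Num.Theory.
Local Open Scope ring_scope.

Set Implicit Arguments. Unset Strict Implicit. Unset Printing Implicit Defensive.
Section S.
Variable R : realType.
Local Open Scope classical_set_scope.

Definition dsig (x : R) : R := expR (- x) / (1 + expR (- x)) ^+ 2.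

Lemma sig_derive (x : R) : is_derive x 1 (@sigmoid R) (dsig x).
Proof.
have h1 : is_derive x 1 (fun y : R => expR (- y)) (expR (- x) * (-1)).
  have := @is_derive1_comp R expR (fun y => - y) x (expR (- x)) (-1).
  by apply => //; apply: is_deriveNid.
have h2 : is_derive x 1 (fun y : R => 1 + expR (- y)) (0 + expR (- x) * (-1)).
  by apply: is_deriveD.
have h3 := @is_deriveV R (fun y : R => 1 + expR (- y)) x _ 1.
have hne : 1 + expR (- x) != 0 by rewrite gt_eqF // ltr_pwDl // expR_gt0.
have := h3 _ hne h2.
have -> : (fun y : R => (1 + expR (- y))^-1) = @sigmoid R.
  by apply/funext => y; rewrite /sigmoid div1r.
move=> H; apply: is_derive_eq; rewrite /dsig /=.
rewrite /GRing.scale /=. field. by [].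
Qed.
Lemma dsig_bnd (x : R) : 0 <= dsig x <= 1/4.
Proof.
rewrite /dsig; set E := expR (- x).
have E0 : 0 < E by apply: expR_gt0.
have D0 : 0 < (1 + E) ^+ 2 by apply: exprn_gt0; lra.
apply/andP; split; first by apply: divr_ge0; lra.
rewrite ler_pdivrMr // expr2; have := sqr_ge0 (1 - E); rewrite expr2; nra.
Qed.

Lemma sig_mvt (u v : R) : exists k, 0 <= k <= 1/4 /\ sigmoid v - sigmoid u = k * (v - u).
Proof.
wlog uv : u v / u <= v.
  move=> W; have [/W //|/ltW vu] := leP u v.
  have [k [kb e]] := W _ _ vu; exists k; split => //.
  by rewrite -opprB e -mulrN opprB.
have := MVT_segment (f := @sigmoid R) (df := dsig) uv
  (fun x _ => sig_derive x).
case.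
  apply: derivable_within_continuous => z _.
  by have [] := sig_derive z.
move=> c _ e.
by exists (dsig c); split => //; apply: dsig_bnd.
Qed.

Lemma sig_sym (a : R) : sigmoid a + sigmoid (- a) = 1.
Proof.
rewrite /sigmoid opprK expRN.
have E0 : 0 < expR a by apply: expR_gt0.
field; apply/andP; split; rewrite gt_eqF //; lra.
Qed.

Lemma step (a g y s2 : R) : 0 <= y -> 0 <= s2 -> y * s2 <= 2 ->
  g * (y * (SSO a g - 1)) + s2 * (y * (SSO a g - 1)) ^+ 2 <= 0.
Proof.
move=> y0 s0 ys.
have [k [/andP [k0 k1] e]] := sig_mvt (- a) (- g - a).
have hd : SSO a g - 1 = - 2 * k * g.
  rewrite /SSO; have := sig_sym a.
  rewrite (_ : - g - a - - a = - g) in e; last by ring.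
  move=> hs; rewrite -[sigmoid a](addrK (sigmoid (- a))) hs.
  have -> : 2 * sigmoid (- g - a) + 2 * (1 - sigmoid (- a)) - 1 - 1 =
    2 * (sigmoid (- g - a) - sigmoid (- a)) by ring.
  by rewrite e; ring.
rewrite hd.
have g2 : 0 <= g ^+ 2 by apply: sqr_ge0.
have -> : g * (y * (- 2 * k * g)) + s2 * (y * (- 2 * k * g)) ^+ 2 =
  (y * k * g ^+ 2) * (4 * k * (y * s2) - 2) by ring.
apply: mulr_ge0_le0; first by do 2 apply: mulr_ge0 => //.
nra.
Qed.

Definition sq (k : nat) (v : 'cV[R]_k) : R := \sum_(i < k) v i 0 ^+ 2.
Definition dot (k : nat) (u v : 'cV[R]_k) : R := \sum_(i < k) u i 0 * v i 0.

Lemma sq_ge0 k (v : 'cV[R]_k) : 0 <= sq v.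
Proof. by apply: sumr_ge0 => i _; apply: sqr_ge0. Qed.

Lemma norm2_sq k (v : 'cV[R]_k) : norm2 v = Num.sqrt (sq v).
Proof. by []. Qed.

Lemma sqB k (u w : 'cV[R]_k) : sq (u - w) = sq u - 2 * dot u w + sq w.
Proof.
rewrite /sq /dot mulr_sumr -sumrB -big_split /=.
by apply: eq_bigr => i _; rewrite !mxE; ring.
Qed.

Lemma sqZ k c (u : 'cV[R]_k) : sq (c *: u) = c ^+ 2 * sq u.
Proof.
rewrite /sq mulr_sumr; apply: eq_bigr => i _; rewrite mxE; ring.
Qed.

Lemma dot_mul n m (H : 'M[R]_(n, m)) r v : dot r (H *m v) = dot (H^T *m r) v.
Proof.
rewrite /dot.
under eq_bigr do rewrite mxE big_distrr.
rewrite exchange_big; apply: eq_bigr => j _ /=; rewrite mxE big_distrl.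
apply: eq_bigr => i _; rewrite !mxE /=; ring.
Qed.

Lemma sq_eq0 k (v : 'cV[R]_k) : sq v = 0 -> v = 0.
Proof.
move=> /eqP; rewrite psumr_eq0; last by move=> i _; apply: sqr_ge0.
move=> /allP h; apply/matrixP => i j; rewrite (ord1 j) mxE.
have := h i (mem_index_enum i); rewrite /= sqrf_eq0 => /eqP //.
Qed.

Lemma spec_bnd n m (H : 'M[R]_(n, m)) (v : 'cV[R]_m) :
  has_ubound [set norm2 (H *m y) | y in [set y : 'cV[R]_m | norm2 y <= 1]] ->
  sq (H *m v) <= spec_norm H ^+ 2 * sq v.
Proof.
move=> hub.
have ub := ub_le_sup hub.
have [/sq_eq0 ->|vp] := eqVneq (sq v) 0.
  have -> : sq (H *m 0) = 0.
    by rewrite mulmx0 /sq big1 // => i _; rewrite mxE expr0n.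
  by rewrite /sq big1 ?mulr0 // => i _; rewrite mxE expr0n.
have vpos : 0 < sq v by rewrite lt_def vp sq_ge0.
set t := Num.sqrt (sq v).
have t0 : 0 < t by rewrite sqrtr_gt0.
have tt : t ^+ 2 = sq v by rewrite sqr_sqrtr // sq_ge0.
have hw : norm2 (t^-1 *: v) <= 1.
  rewrite norm2_sq sqZ exprVn tt mulVf // sqrtr1 //.
have := ub _ (ex_intro2 _ _ (t^-1 *: v) hw erefl).
rewrite -/(spec_norm H) norm2_sq -scalemxAr sqZ sqrtrM; last first.
  by apply: exprn_ge0; rewrite invr_ge0 ltW.
rewrite sqrtr_sqr ger0_norm; last by rewrite invr_ge0 ltW.
set q := Num.sqrt (sq (H *m v)).
have q0 : 0 <= q by apply: sqrtr_ge0.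
have qq : q ^+ 2 = sq (H *m v) by rewrite sqr_sqrtr // sq_ge0.
move=> h.
have h2 : q <= spec_norm H * t by rewrite -ler_pdivrMr // mulrC.
rewrite -qq -tt -exprMn.
have := mulr_ge0 q0 (ltW t0) => _.
rewrite lerXn2r // ?nnegrE //.
by apply: le_trans h2.
Qed.
End S.

Lemma norminf_ge0 (R : realType) k (v : 'cV[R]_k) : 0 <= norminf v.
Proof. by rewrite /norminf; elim/big_ind: _ => // a b ha hb; rewrite le_max ha. Qed.

Lemma norminf_ge (R : realType) k (v : 'cV[R]_k) i : v i 0 <= norminf v.
Proof.
rewrite /norminf (bigD1 i) //= le_max; apply/orP; left; exact: ler_norm.
Qed.

Theorem theorem2 (R : realType) (n m : nat) (H : 'M[R]_(n, m))
  (x : 'cV[R]_n) (y0 : 'cV[R]_m) (alpha : R) :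
  H != 0 ->
  y0 != 0 ->
  (forall i, 0 <= y0 i 0) ->
  0 <= alpha ->
  alpha <= 2 / (norminf y0 * spec_norm H ^+ 2) - 1 ->
  energy H x (hadamard y0 (SSOv alpha (gradE H x y0))) <= energy H x y0.
Proof.
move=> _ _ ypos a0 ha.
set s := spec_norm H.
set K := norminf y0 * s ^+ 2.
have K0 : 0 <= K by apply: mulr_ge0; [apply: norminf_ge0 | apply: sqr_ge0].
have K2 : K <= 2.
  have [Ke|Kn] := eqVneq K 0; first by rewrite Ke.
  have Kp : 0 < K by rewrite lt_def Kn K0.
  have : 1 <= 2 / K by move: ha; rewrite -/s -/K; lra.
  by rewrite ler_pdivlMr // mul1r.
have hub : has_ubound [set norm2 (H *m y) | y in [set y : 'cV[R]_m | norm2 y <= 1]].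
  apply: contrapT => nub.
  have s0 : s = 0 by rewrite /s /spec_norm sup_out // => -[].
  move: ha; rewrite -/s -/K /K s0 expr0n /= mulr0 invr0 mulr0; lra.
set g := gradE H x y0.
set y1 := hadamard y0 (SSOv alpha g).
set D := y1 - y0.
set r := x - H *m y0.
have e1 : x - H *m y1 = r - H *m D by rewrite /D /r mulmxBr; rewrite opprB addrA subrK.
rewrite /energy !norm2_sq !sqr_sqrtr ?sq_ge0 // e1 -/r sqB dot_mul.
have hg : forall j, g j 0 = - 2 * (H^T *m r) j 0.
  move=> j; rewrite /g /gradE /r -opprB mulmxN !mxE; ring.
have hD : forall j, D j 0 = y0 j 0 * (SSO alpha (g j 0) - 1).
  move=> j; rewrite /D /y1 !mxE; ring.
suff : - 2 * dot (H^T *m r) D + s ^+ 2 * sq D <= 0.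
  have := spec_bnd D hub; rewrite -/s; lra.
rewrite /dot /sq mulr_sumr mulr_sumr -big_split /=.
apply: sumr_le0 => j _.
have -> : - 2 * ((H^T *m r) j 0 * D j 0) + s ^+ 2 * D j 0 ^+ 2 =
  g j 0 * D j 0 + s ^+ 2 * D j 0 ^+ 2 by rewrite hg; ring.
rewrite hD; apply: step => //; first exact: sqr_ge0.
apply: le_trans K2; rewrite /K ler_wpM2r //; first exact: sqr_ge0.
exact: norminf_ge.
Qed.
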